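(* Let $(S,m)$, $\phi:S'\to S''$ be as in the context, and let $k$, $\overline{S}$, $\psi_i$ be as constructed there. Then for all $i,j\in\mathbb{Z}/k$ and $s,t,s',t'\in S$ with $s\neq t$, $\psi_i(s)=\psi_j(s')$ and $\psi_i(t)=\psi_j(t')$, we have $s'\ne t'$ and $m(s,t)=m(s',t')$. Consequently the function $\overline{m}$ on 2-element subsets $\{x,y\}$ of $\overline{S}$ given by $\overline{m}(x,y)=m(s,t)$ if $x=\psi_i(s)$, $y=\psi_i(t)$ for some $i\in\mathbb{Z}/k$ and $s,t\in S$, and $\overline{m}(x,y)=\infty$ otherwise, is well defined.
   Context: $(S,m)$ is an Artin system: a finite set $S$ with a function $m$ from 2-element subsets of $S$ to $\{2,3,\dots\}\cup\{\infty\}$. $\phi:S'\to S''$ is a bijection between subsets of $S$ with $m(s,s')=m(\phi(s),\phi(s'))$ for all distinct $s,s'\in S'$. Let $\Lambda$ be the directed graph with vertex set $S$ and an edge $(s,\phi(s))$ for each $s\in S'$; it is a disjoint union of directed cycles and directed (non-closed) paths. Choose an integer $k$ that is a multiple of the length (number of edges) of each cycle in $\Lambda$ and strictly greater than twice the length of each path in $\Lambda$. Let $\overline{S}$ be the quotient of $\mathbb{Z}/k\times S$ by the equivalence relation generated by $(i,s)\sim(i+1,\phi(s))$ for $i\in\mathbb{Z}/k$, $s\in S'$, and let $\psi_i:S\to\overline{S}$ send $s$ to the class of $(i,s)$. *)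

(* Defs.v *)
From HB Require Import structures.
From mathcomp Require Import all_boot all_order all_algebra.
From Stdlib Require Import Relations.
Set Implicit Arguments. Unset Strict Implicit. Unset Printing Implicit Defensive.
Import Order.TTheory GRing.Theory Num.Theory.

(* Coxeter/Artin labels: [Some n] is the integer n, [None] is infinity. *)
Definition label := option nat.

(* (S,m) is an Artin system: m is defined on 2-element subsets, i.e. it is
   symmetric on distinct elements, with finite values >= 2.  (Diagonal values
   m s s are meaningless and unconstrained.) *)
Definition artin_system (S : finType) (m : S -> S -> label) : Prop :=
  (forall s t, s != t -> m s t = m t s) /\
  (forall s t n, s != t -> m s t = Some n -> (2 <= n)%N).

(* phi : S' -> S'' is a bijection onto S'' := phi @: S' (represented by a total
   function S -> S whose values off S' are irrelevant), preserving m. *)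
Definition partial_iso (S : finType) (m : S -> S -> label)
    (S' : {set S}) (phi : S -> S) : Prop :=
  {in S' &, injective phi} /\
  (forall s t, s \in S' -> t \in S' -> s != t -> m s t = m (phi s) (phi t)).

(* In the graph Lambda (edges s -> phi s for s in S'), the walk of n edges
   starting at s exists. *)
Definition walk (S : finType) (S' : {set S}) (phi : S -> S) (s : S) (n : nat) :=
  forall l, (l < n)%N -> iter l phi s \in S'.

Definition cycle_len (S : finType) (S' : {set S}) (phi : S -> S) (s : S) (n : nat) :=
  [/\ (0 < n)%N, walk S' phi s n, iter n phi s = s &
      forall l, (0 < l < n)%N -> iter l phi s != s].

(* A non-closed directed path component of Lambda: starts at a vertex s with
   no incoming edge (s \notin S''), and has n edges. *)
Definition path_len (S : finType) (S' : {set S}) (phi : S -> S) (s : S) (n : nat) :=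
  [/\ s \notin phi @: S', walk S' phi s n & iter n phi s \notin S'].

Definition admissible_k (S : finType) (S' : {set S}) (phi : S -> S) (k : int) :=
  (forall s n, cycle_len S' phi s n -> (n%:Z %| k)%Z) /\
  (forall s n, path_len S' phi s n -> (2 * n)%:Z < k)%R.

(* Generators of the equivalence relation on Z/k x S, modelled on Z x S:
   (i,s) ~ (i+k,s) encodes reduction modulo k, and (i,s) ~ (i+1, phi s). *)
Inductive gen_rel (S : finType) (S' : {set S}) (phi : S -> S) (k : int) :
    int * S -> int * S -> Prop :=
  | gen_phi i s : s \in S' -> gen_rel S' phi k (i, s) (i + 1, phi s)%R
  | gen_mod i s : gen_rel S' phi k (i, s) (i + k, s)%R.

(* psi_i(s) = psi_j(t) in Sbar  iff  (i,s) ~ (j,t). *)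
Definition psi_eq (S : finType) (S' : {set S}) (phi : S -> S) (k : int)
    (i : int) (s : S) (j : int) (t : S) : Prop :=
  clos_refl_sym_trans _ (gen_rel S' phi k) (i, s) (j, t).

(* Main.v *)
Require Import Defs.
From HB Require Import structures.
From mathcomp Require Import all_boot all_order all_algebra.
From Stdlib Require Import Relations Classical.
Set Implicit Arguments. Unset Strict Implicit. Unset Printing Implicit Defensive.
Import GRing.Theory Num.Theory.

Lemma id1 (a b c u v : int) : (a - c - (u + v) = (a - b - u) + (b - c - v))%R.
Proof. by rewrite opprD addrACA -!addrA (addrCA (-b)%R) addKr addrA (addrC (-c)%R). Qed.

Lemma walk_le (S : finType) (S' : {set S}) (phi : S -> S) x a b :
  a <= b -> walk S' phi x b -> walk S' phi x a.
Proof. by move=> ab w l la; apply: w; apply: leq_trans ab. Qed.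

Lemma walk_shift (S : finType) (S' : {set S}) (phi : S -> S) x a b :
  walk S' phi x (a + b) -> walk S' phi (iter a phi x) b.
Proof. by move=> w l lb; rewrite -iterD; apply: w; rewrite addnC ltn_add2l. Qed.

Lemma walk_cat (S : finType) (S' : {set S}) (phi : S -> S) x a b :
  walk S' phi x a -> walk S' phi (iter a phi x) b -> walk S' phi x (a + b).
Proof.
move=> wa wb l lab; case: (ltnP l a) => la; first exact: wa.
rewrite -(subnKC la) addnC iterD; apply: wb; by rewrite -(ltn_add2l a) subnKC.
Qed.

Lemma iter_inj (S : finType) (S' : {set S}) (phi : S -> S) :
  {in S' &, injective phi} -> forall e x y,
  walk S' phi x e -> walk S' phi y e -> iter e phi x = iter e phi y -> x = y.
Proof.
move=> inj; elim=> [|e IH] x y wx wy //=.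
move=> E; apply: IH.
- exact: walk_le wx.
- exact: walk_le wy.
- by apply: inj => //; [apply: wx | apply: wy].
Qed.

Lemma shiftC (S : finType) (m : S -> S -> label) (S' : {set S}) (phi : S -> S) :
  partial_iso m S' phi -> forall e s t, s != t ->
  walk S' phi s e -> walk S' phi t e ->
  iter e phi s != iter e phi t /\ m s t = m (iter e phi s) (iter e phi t).
Proof.
move=> [inj pm]; elim=> [|e IH] s t st ws wt //=.
have [ne Em] := IH s t st (walk_le (leqnSn e) ws) (walk_le (leqnSn e) wt).
have hs : iter e phi s \in S' by apply: ws.
have ht : iter e phi t \in S' by apply: wt.
split.
- by apply/negP => /eqP E; move/negP: ne; apply; apply/eqP; apply: inj.
- by rewrite Em; apply: pm.
Qed.

Lemma pig (S : finType) (f : nat -> S) : exists a b, (a < b <= #|S|) /\ f a = f b.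
Proof.
apply: NNPP => H.
have inj : injective (fun i : 'I_#|S|.+1 => f i).
  move=> i j E; apply/val_inj => /=.
  case: (ltngtP i j) => // h; exfalso; apply: H.
  - by exists i, j; rewrite h /= -ltnS ltn_ord.
  - by exists j, i; rewrite h /= -ltnS ltn_ord.
by have := leq_card _ inj; rewrite card_ord ltnn.
Qed.

Lemma iter_mul (S : finType) (phi : S -> S) x p q :
  iter p phi x = x -> iter (q * p) phi x = x.
Proof. by move=> e; elim: q => [|q IH] //; rewrite mulSn iterD IH e. Qed.

Lemma periodic_all (S : finType) (S' : {set S}) (phi : S -> S) x p :
  0 < p -> walk S' phi x p -> iter p phi x = x -> forall l, iter l phi x \in S'.
Proof.
move=> p0 w e l; rewrite (divn_eq l p) addnC iterD iter_mul //.
by apply: w; rewrite ltn_pmod.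
Qed.

Definition cyc (S : finType) (S' : {set S}) (phi : S -> S) (k : int) x :=
  (forall l, iter l phi x \in S') /\ (forall d : nat, (k %| Posz d)%Z -> iter d phi x = x).

Definition pathish (S : finType) (S' : {set S}) (phi : S -> S) (k : int) x :=
  exists kn : nat, k = Posz kn /\ forall e, walk S' phi x e -> 2 * e < kn.

Lemma dichotomy (S : finType) (S' : {set S}) (phi : S -> S) (k : int) :
  {in S' &, injective phi} -> admissible_k S' phi k ->
  forall x, cyc S' phi k x \/ pathish S' phi k x.
Proof.
move=> inj adm x.
case: (classic (forall l, iter l phi x \in S')) => Hall.
- left.
  have [a [b [/andP[ab _] E]]] := pig (fun l => iter l phi x).
  have Ep : iter (b - a) phi x = x.
    apply: (@iter_inj _ _ _ inj a).
    - by move=> l _; rewrite -iterD; apply: Hall.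
    - by move=> l _; apply: Hall.
    - by rewrite -iterD subnKC; [rewrite E | exact: ltnW].
  have exP : exists p, (0 < p) && (iter p phi x == x).
    by exists (b - a); rewrite subn_gt0 ab Ep eqxx.
  case: (ex_minnP exP) => p /andP[p0 /eqP Hp] Hmin.
  have cl : cycle_len S' phi x p.
    split => //; try by move=> l _; apply: Hall.
    move=> l /andP[l0 lp]; apply/negP => /eqP E'.
    by have := Hmin l; rewrite l0 E' eqxx leqNgt lp => /(_ isT).
  have pk := adm.1 x p cl.
  split => // d kd.
  have : (p %| d)%N by exact: (dvdz_trans pk kd).
  by case/dvdnP => q ->; apply: iter_mul.
- right.
  have [N HN] : exists N, iter N phi x \notin S'.
    apply: NNPP => H; apply: Hall => l.
    case: (boolP (iter l phi x \in S')) => // h; exfalso; apply: H; by exists l.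
  have [r [y [wy [ey yn]]]] : exists r y, walk S' phi y r /\ iter r phi y = x /\
      y \notin phi @: S'.
    apply: NNPP => H.
    have Hall2 : forall r, exists y, walk S' phi y r /\ iter r phi y = x.
      elim=> [|r [y [wy ey]]]; first by exists x.
      have : y \in phi @: S'.
        apply: NNPP => yn; apply: H; exists r, y; split => //; split => //.
        by apply/negP.
      case/imsetP => z zS yz; exists z; split; last by rewrite iterSr -yz.
      move=> [_|l] //; rewrite ltnS => lr; rewrite iterSr -yz; exact: wy.
    have [y [wy ey]] := Hall2 #|S|.
    have [a [b [/andP[ab bS] E]]] := pig (fun l => iter l phi y).
    have Ep : iter (b - a) phi y = y.
      apply: (@iter_inj _ _ _ inj a).
      - move=> l la; rewrite -iterD; apply: wy.
        apply: (@leq_trans b) => //; rewrite addnC -ltn_subRL subKn //; exact: ltnW.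
      - by apply: walk_le wy; apply: leq_trans bS; apply: ltnW.
      - by rewrite -iterD subnKC; [rewrite E | exact: ltnW].
    have wba : walk S' phi y (b - a) by apply: walk_le wy; exact: leq_trans (leq_subr _ _) bS.
    have ba0 : 0 < b - a by rewrite subn_gt0.
    have := periodic_all ba0 wba Ep (N + #|S|).
    rewrite iterD ey.
    by move/negP: HN.
  have exP : exists n, iter n phi y \notin S' by exists (N + r); rewrite iterD ey.
  case: (ex_minnP exP) => n Hn Hmin.
  have wn : walk S' phi y n.
    move=> l ln; case: (boolP (iter l phi y \in S')) => // h.
    by have := Hmin l h; rewrite leqNgt ln.
  have pl : path_len S' phi y n by split.
  have Hk := adm.2 y n pl.
  have [kn ek] : exists kn : nat, k = Posz kn.
    by move: Hk; case: k {adm} => [kn|kn] Hk; [exists kn | ].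
  exists kn; split => // e we.
  move: Hk; rewrite ek ltz_nat => Hk.
  have wre : walk S' phi y (r + e) by apply: walk_cat => //; rewrite ey.
  have ren : r + e <= n.
    rewrite leqNgt; apply/negP => nre; move/negP: Hn; apply; exact: wre.
  apply: leq_ltn_trans Hk; rewrite leq_mul2l /=.
  exact: leq_trans (leq_addl _ _) ren.
Qed.

Lemma id2 (a b o : int) : (b - a - - o = - (a - b - o))%R.
Proof. by rewrite opprK !opprB addrC addrA (addrC o). Qed.
Lemma id3 (x o1 o2 : int) : ((x - o1) - (x - o2) = o2 - o1)%R.
Proof. by rewrite opprB addrC addrA subrK. Qed.

Definition Rel (S : finType) (S' : {set S}) (phi : S -> S) (k : int) (p q : int * S) :=
  exists e : nat, exists o : int, (k %| (q.1 - p.1 - o)%R)%Z /\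
   ((o = Posz e /\ walk S' phi p.2 e /\ q.2 = iter e phi p.2) \/
    (o = (- Posz e)%R /\ walk S' phi q.2 e /\ p.2 = iter e phi q.2)).

Lemma Rel_refl (S : finType) (S' : {set S}) (phi : S -> S) k p : Rel S' phi k p p.
Proof.
exists 0, 0%R; split; first by rewrite subrr subr0 dvdz0.
by left; split.
Qed.

Lemma Rel_sym (S : finType) (S' : {set S}) (phi : S -> S) k p q :
  Rel S' phi k p q -> Rel S' phi k q p.
Proof.
move=> [e [o [d H]]]; exists e, (- o)%R; split; first by rewrite id2 rpredN.
case: H => [[-> H]|[-> H]]; [right | left]; split => //; by rewrite opprK.
Qed.

Lemma Rel_trans (S : finType) (S' : {set S}) (phi : S -> S) k :
  {in S' &, injective phi} ->
  forall p q r, Rel S' phi k p q -> Rel S' phi k q r -> Rel S' phi k p r.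
Proof.
move=> inj p q r [e1 [o1 [d1 H1]]] [e2 [o2 [d2 H2]]].
have d : (k %| (r.1 - p.1 - (o1 + o2))%R)%Z.
  by rewrite (addrC o1) (id1 _ q.1); apply: rpredD.
case: H1 => [[eo1 [w1 E1]]|[eo1 [w1 E1]]]; case: H2 => [[eo2 [w2 E2]]|[eo2 [w2 E2]]].
- exists (e1 + e2), (o1 + o2)%R; split => //; left; split; first by rewrite eo1 eo2 PoszD.
  split; first by apply: walk_cat => //; rewrite -E1.
  by rewrite E2 E1 -iterD addnC.
- case: (leqP e2 e1) => h.
  + exists (e1 - e2), (o1 + o2)%R; split => //; left; split; first by rewrite eo1 eo2 -(subzn h).
    have ee : e2 + (e1 - e2) = e1 by rewrite subnKC.
    split; first by apply: walk_le w1; apply: leq_subr.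
    apply: (@iter_inj _ _ _ inj e2); first exact: w2.
    * by apply: walk_shift; rewrite addnC ee.
    * by rewrite -E2 E1 -iterD ee.
  + exists (e2 - e1), (o1 + o2)%R; split => //; right; split.
      by rewrite eo1 eo2 -(subzn (ltnW h)) opprB.
    have ee : e1 + (e2 - e1) = e2 by rewrite subnKC //; apply: ltnW.
    split; first by apply: walk_le w2; apply: leq_subr.
    apply: (@iter_inj _ _ _ inj e1); first exact: w1.
    * by apply: walk_shift; rewrite addnC ee.
    * by rewrite -E1 E2 -iterD ee.
- case: (leqP e1 e2) => h.
  + exists (e2 - e1), (o1 + o2)%R; split => //; left; split.
      by rewrite eo1 eo2 -(subzn h) addrC.
    have ee : e1 + (e2 - e1) = e2 by rewrite subnKC.
    split; first by rewrite E1; apply: walk_shift; rewrite ee.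
    by rewrite E2 E1 -iterD subnK.
  + exists (e1 - e2), (o1 + o2)%R; split => //; right; split.
      by rewrite eo1 eo2 -(subzn (ltnW h)) opprB addrC.
    have ee : e2 + (e1 - e2) = e1 by rewrite subnKC //; apply: ltnW.
    split; first by rewrite E2; apply: walk_shift; rewrite ee.
    by rewrite E1 E2 -iterD subnK //; apply: ltnW.
- exists (e2 + e1), (o1 + o2)%R; split => //; right; split.
    by rewrite eo1 eo2 PoszD opprD addrC.
  split; first by apply: walk_cat => //; rewrite -E2.
  by rewrite E1 E2 -iterD addnC.
Qed.

Lemma psi_Rel (S : finType) (S' : {set S}) (phi : S -> S) k i s j t :
  {in S' &, injective phi} ->
  psi_eq S' phi k i s j t -> Rel S' phi k (i, s) (j, t).
Proof.
move=> inj; rewrite /psi_eq.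
elim => {i s j t}.
- move=> x y [] {x y}.
  + move=> i s sS; exists 1, 1%R; split; first by rewrite /= (addrC i) addrK subrr dvdz0.
    by left; split => //; split => // [] [].
  + move=> i s; exists 0, 0%R; split; first by rewrite /= subr0 (addrC i) addrK dvdzz.
    by left.
- move=> x; exact: Rel_refl.
- move=> x y _; exact: Rel_sym.
- move=> x y z _ H1 _ H2; exact: Rel_trans H1 H2.
Qed.

Lemma cyc_walk (S : finType) (S' : {set S}) (phi : S -> S) k x n e :
  cyc S' phi k x -> walk S' phi (iter n phi x) e.
Proof. by move=> [c _] l _; rewrite -iterD; apply: c. Qed.

Lemma cyc_iter (S : finType) (S' : {set S}) (phi : S -> S) k x a b :
  cyc S' phi k x -> (k %| (Posz a - Posz b)%R)%Z -> iter a phi x = iter b phi x.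
Proof.
move=> [_ c] d; case: (leqP a b) => ab.
- have e : iter (b - a) phi x = x by apply: c; rewrite -(subzn ab) -opprB rpredN.
  by rewrite -(subnKC ab) iterD e.
- have e : iter (a - b) phi x = x by apply: c; rewrite -(subzn (ltnW ab)).
  by rewrite -(subnKC (ltnW ab)) iterD e.
Qed.

Lemma small_eq (kn a b : nat) : (Posz kn %| (Posz a - Posz b)%R)%Z ->
  2 * a < kn -> 2 * b < kn -> a = b.
Proof.
rewrite dvdzE absz_nat => H ha hb; apply/eqP; rewrite -distn_eq0; apply/eqP.
have lt : (`|(Posz a - Posz b)%R| < kn)%N.
  case: (leqP a b) => ab; [rewrite distnEr // | rewrite distnEl; last exact: ltnW].
  + apply: leq_ltn_trans hb; apply: leq_trans (leq_subr _ _) _; exact: leq_pmull.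
  + apply: leq_ltn_trans ha; apply: leq_trans (leq_subr _ _) _; exact: leq_pmull.
case: (posnP `|(Posz a - Posz b)%R|%N) => [->|d0]; first by [].
by have := dvdn_leq d0 H; rewrite leqNgt lt.
Qed.

Lemma small_zero (kn a b : nat) : (Posz kn %| Posz (a + b))%Z ->
  2 * a < kn -> 2 * b < kn -> a = 0 /\ b = 0.
Proof.
rewrite dvdzE !absz_nat => H ha hb.
have lt : a + b < kn.
  case: (leqP a b) => ab.
  + apply: leq_ltn_trans hb; by rewrite mul2n -addnn leq_add2r.
  + apply: leq_ltn_trans ha; rewrite mul2n -addnn leq_add2l; exact: ltnW.
case: (posnP (a + b)) => [|d0]; first by move/eqP; rewrite addn_eq0 => /andP[/eqP -> /eqP ->].
by have := dvdn_leq d0 H; rewrite leqNgt lt.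
Qed.

Lemma fin_fw (S : finType) (m : S -> S -> label) (S' : {set S}) (phi : S -> S) e s t s' t' :
  partial_iso m S' phi -> s != t -> walk S' phi s e -> walk S' phi t e ->
  s' = iter e phi s -> t' = iter e phi t -> s' != t' /\ m s t = m s' t'.
Proof. by move=> pi st ws wt -> ->; exact: (shiftC pi st ws wt). Qed.

Lemma fin_bw (S : finType) (m : S -> S -> label) (S' : {set S}) (phi : S -> S) e s t s' t' :
  partial_iso m S' phi -> s != t -> walk S' phi s' e -> walk S' phi t' e ->
  s = iter e phi s' -> t = iter e phi t' -> s' != t' /\ m s t = m s' t'.
Proof.
move=> pi st ws wt Es Et.
have st' : s' != t'.
  by apply/negP => /eqP E; move: st; rewrite Es Et E eqxx.
have [_ Em] := shiftC pi st' ws wt.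
by split => //; rewrite Es Et Em.
Qed.

Theorem lemma4 (S : finType) (m : S -> S -> label) (S' : {set S}) (phi : S -> S)
    (k : int) :
  artin_system m -> partial_iso m S' phi -> admissible_k S' phi k ->
  forall (i j : int) (s t s' t' : S),
    s != t ->
    psi_eq S' phi k i s j s' ->
    psi_eq S' phi k i t j t' ->
    s' != t' /\ m s t = m s' t'.
Proof.
move=> art pi adm i j s t s' t' st H1 H2.
have inj := pi.1.
have [e1 [o1 [d1 R1]]] := psi_Rel inj H1.
have [e2 [o2 [d2 R2]]] := psi_Rel inj H2.
move: d1 d2 R1 R2 => /= d1 d2 R1 R2.
have d : (k %| (o2 - o1)%R)%Z by rewrite -(id3 (j - i)%R); apply: rpredB.
have dich := dichotomy inj adm.
case: R1 => [[eo1 [w1 E1]]|[eo1 [w1 E1]]]; case: R2 => [[eo2 [w2 E2]]|[eo2 [w2 E2]]];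
  rewrite eo1 eo2 in d.
-
  case: (dich t) => [ct|pt].
    have wt : walk S' phi t e1 := @cyc_walk S S' phi k _ 0 e1 ct.
    apply: (fin_fw pi st w1 wt E1).
    by rewrite E2; apply: (cyc_iter ct d).
  case: (dich s) => [cs|ps].
    have ws : walk S' phi s e2 := @cyc_walk S S' phi k _ 0 e2 cs.
    apply: (fin_fw pi st ws w2 _ E2).
    by rewrite E1; apply: (cyc_iter cs); rewrite -opprB rpredN.
  have [kn [ek hs]] := ps; have [kn' [ek' ht]] := pt.
  have kk : kn' = kn by move: ek'; rewrite ek => [[]].
  subst kn'.
  have e21 := small_eq (eq_ind _ (fun z => (z %| _)%Z) d _ ek) (ht _ w2) (hs _ w1).
  subst e2.
  exact: (fin_fw pi st w1 w2 E1 E2).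
-
  have d' : (k %| Posz (e1 + e2))%Z by rewrite PoszD -rpredN opprD addrC.
  case: (dich t') => [ct|pt].
    apply: (fin_fw (e := e1) pi st w1 _ E1).
      by rewrite E2; apply: cyc_walk ct.
    by rewrite E2 -iterD; symmetry; apply: ct.2.
  case: (dich s) => [cs|ps].
    apply: (fin_bw (e := e2) pi st _ w2 _ E2).
      by rewrite E1; apply: cyc_walk cs.
    by rewrite E1 -iterD addnC; symmetry; apply: cs.2.
  have [kn [ek hs]] := ps; have [kn' [ek' ht]] := pt.
  have kk : kn' = kn by move: ek'; rewrite ek => [[]].
  subst kn'.
  have [z1 z2] := small_zero (eq_ind _ (fun z => (z %| _)%Z) d' _ ek) (hs _ w1) (ht _ w2).
  subst e1 e2.
  apply: (fin_fw (e := 0) pi st w1 _ E1); [by move=> l | by rewrite E2].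
-
  have d' : (k %| Posz (e1 + e2))%Z by move: d; rewrite opprK PoszD addrC.
  case: (dich s') => [cs|ps].
    apply: (fin_fw (e := e2) pi st _ w2 _ E2).
      by rewrite E1; apply: cyc_walk cs.
    by rewrite E1 -iterD addnC; symmetry; apply: cs.2.
  case: (dich t) => [ct|pt].
    apply: (fin_bw (e := e1) pi st w1 _ E1).
      by rewrite E2; apply: cyc_walk ct.
    by rewrite E2 -iterD; symmetry; apply: ct.2.
  have [kn [ek hs]] := ps; have [kn' [ek' ht]] := pt.
  have kk : kn' = kn by move: ek'; rewrite ek => [[]].
  subst kn'.
  have [z1 z2] := small_zero (eq_ind _ (fun z => (z %| _)%Z) d' _ ek) (hs _ w1) (ht _ w2).
  subst e1 e2.
  apply: (fin_fw (e := 0) pi st _ w2 _ E2); [by move=> l | by rewrite E1].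
-
  have d' : (k %| (Posz e1 - Posz e2)%R)%Z by rewrite addrC opprK in d.
  case: (dich t') => [ct|pt].
    have wt : walk S' phi t' e1 := @cyc_walk S S' phi k _ 0 e1 ct.
    apply: (fin_bw pi st w1 wt E1).
    by rewrite E2; apply: (cyc_iter ct); rewrite -opprB rpredN.
  case: (dich s') => [cs|ps].
    have ws : walk S' phi s' e2 := @cyc_walk S S' phi k _ 0 e2 cs.
    apply: (fin_bw pi st ws w2 _ E2).
    by rewrite E1; apply: (cyc_iter cs).
  have [kn [ek hs]] := ps; have [kn' [ek' ht]] := pt.
  have kk : kn' = kn by move: ek'; rewrite ek => [[]].
  subst kn'.
  have e12 := small_eq (eq_ind _ (fun z => (z %| _)%Z) d' _ ek) (hs _ w1) (ht _ w2).
  subst e2.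
  exact: (fin_bw pi st w1 w2 E1 E2).
Qed.
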